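(* Let $q$ be a nonzero complex number and let ${\mathbb F}({\rm SP}_q^{2|1})$ be the unital complex superalgebra generated by the even elements $x_+, x_-, x_+^{-1}$ and the odd element $\theta$ subject to $$x_+\theta = q\,\theta x_+,\quad \theta x_- = q\, x_-\theta,\quad x_-x_+ = q^{-2}x_+x_-,\quad \theta^2 = q^{1/2}(q-1)\,x_-x_+,\quad x_+x_+^{-1}={\bf 1}=x_+^{-1}x_+ .$$ Then ${\mathbb F}({\rm SP}_q^{2|1})$ is a $\mathbb Z_2$-graded Hopf algebra, with: (i) coproduct $\Delta:{\mathbb F}({\rm SP}_q^{2|1})\to{\mathbb F}({\rm SP}_q^{2|1})\otimes{\mathbb F}({\rm SP}_q^{2|1})$ defined by $$\Delta(x_+)=x_+\otimes x_+,\quad \Delta(\theta)=\theta\otimes{\bf 1}+{\bf 1}\otimes\theta,\quad \Delta(x_-)=x_+^{-1}\otimes x_- + x_-\otimes x_+^{-1};$$ (ii) counit $\epsilon:{\mathbb F}({\rm SP}_q^{2|1})\to\mathbb C$ given by $\epsilon(x_+)=1$, $\epsilon(\theta)=0$, $\epsilon(x_-)=0$; (iii) a $\mathbb C$-algebra antihomomorphism (coinverse) $S:{\mathbb F}({\rm SP}_q^{2|1})\to{\mathbb F}({\rm SP}_{q^{-1}}^{2|1})$ defined by $$S(x_+)=x_+^{-1},\quad S(\theta)=-\theta,\quad S(x_-)=-x_+x_-x_+ .$$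
   Context: Grades: $\tau(x_\pm)=\tau(x_+^{-1})=0$, $\tau(\theta)=1$. For superalgebras the tensor product ${\mathbb A}\otimes{\mathbb A}$ has the product $(a_1\otimes a_2)(a_3\otimes a_4)=(-1)^{\tau(a_2)\tau(a_3)}a_1a_3\otimes a_2a_4$ for homogeneous elements. A $\mathbb Z_2$-graded (super-)Hopf algebra is a superalgebra ${\mathbb A}$ with linear maps $\Delta,\epsilon,S$ satisfying coassociativity $(\Delta\otimes{\rm id})\Delta=({\rm id}\otimes\Delta)\Delta$, the counit axiom $m(\epsilon\otimes{\rm id})\Delta={\rm id}=m({\rm id}\otimes\epsilon)\Delta$, the antipode axiom $m(S\otimes{\rm id})\Delta=\eta\epsilon=m({\rm id}\otimes S)\Delta$ (with $m$ the product and $\eta$ the unit map), $\Delta({\bf 1})={\bf 1}\otimes{\bf 1}$, $\epsilon({\bf 1})=1$, $S({\bf 1})={\bf 1}$, and $\Delta(ab)=\Delta(a)\Delta(b)$, $\epsilon(ab)=\epsilon(a)\epsilon(b)$, $S(ab)=(-1)^{\tau(a)\tau(b)}S(b)S(a)$. ${\mathbb F}({\rm SP}_{q^{-1}}^{2|1})$ denotes the same construction with $q$ replaced by $q^{-1}$. *)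

(* Defs.v *)
(* Presented superalgebra F(SP_q^{2|1}) realised honestly as
   (free algebra on 4 generators) / (two-sided ideal generated by the relations),
   with elements represented by formal finite linear combinations of words. *)
From HB Require Import structures.
From mathcomp Require Import all_boot all_order all_algebra.
From mathcomp Require Export complex.
Set Implicit Arguments. Unset Strict Implicit. Unset Printing Implicit Defensive.
Import Order.TTheory GRing.Theory Num.Theory.
Local Open Scope ring_scope.

Inductive gen := Xp | Xm | Xpi | Th.

Definition gen_eqb (a b : gen) : bool :=
  match a, b with
  | Xp, Xp | Xm, Xm | Xpi, Xpi | Th, Th => true
  | _, _ => false
  end.

Lemma gen_eqP : Equality.axiom gen_eqb.
Proof. by case; case; constructor. Qed.

HB.instance Definition _ := hasDecEq.Build gen gen_eqP.

Definition word := seq gen.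

Definition wpar (w : word) : bool := odd (count (pred1 Th) w).

Section SuperHopf.
Variable K : fieldType.

(* formal linear combinations in F, F (x) F, F (x) F (x) F, where F is the
   free algebra (basis: words; tensor powers: basis pairs / triples of words) *)
Definition fs1 := seq (K * word).
Definition fs2 := seq (K * word * word).
Definition fs3 := seq (K * word * word * word).

(* coefficients; two formal sums are equal in the free algebra (resp. its
   tensor powers) iff all coefficients agree *)
Definition coef1 (a : fs1) (w : word) : K := \sum_(p <- a | p.2 == w) p.1.
Definition coef2 (a : fs2) (u v : word) : K :=
  \sum_(p <- a | (p.1.2 == u) && (p.2 == v)) p.1.1.
Definition coef3 (a : fs3) (u v w : word) : K :=
  \sum_(p <- a | [&& p.1.1.2 == u, p.1.2 == v & p.2 == w]) p.1.1.1.
Definition feq1 (a b : fs1) := forall w, coef1 a w = coef1 b w.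
Definition feq2 (a b : fs2) := forall u v, coef2 a u v = coef2 b u v.
Definition feq3 (a b : fs3) := forall u v w, coef3 a u v w = coef3 b u v w.

(* vector space operations (addition is concatenation) *)
Definition scale1 (c : K) (a : fs1) : fs1 := [seq (c * p.1, p.2) | p <- a].
Definition scale2 (c : K) (a : fs2) : fs2 := [seq (c * p.1.1, p.1.2, p.2) | p <- a].
Definition scale3 (c : K) (a : fs3) : fs3 :=
  [seq (c * p.1.1.1, p.1.1.2, p.1.2, p.2) | p <- a].

Definition one1 : fs1 := [:: (1, [::])].
Definition one2 : fs2 := [:: (1, [::], [::])].
Definition mono1 (w : word) : fs1 := [:: (1, w)].

Definition mul1 (a b : fs1) : fs1 :=
  [seq (p.1 * r.1, p.2 ++ r.2) | p <- a, r <- b].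

(* super product on F (x) F:
   (a1 (x) a2)(a3 (x) a4) = (-1)^{tau(a2) tau(a3)} a1 a3 (x) a2 a4 *)
Definition mul2 (a b : fs2) : fs2 :=
  [seq (p.1.1 * r.1.1 * (-1) ^+ (wpar p.2 && wpar r.1.2),
        p.1.2 ++ r.1.2, p.2 ++ r.2) | p <- a, r <- b].

(* defining relations of F(SP_q^{2|1}), written as r = lhs - rhs;
   s is the chosen square root q^{1/2} *)
Definition rels (q s : K) : seq fs1 :=
  [:: [:: (1, [:: Xp; Th]); (- q, [:: Th; Xp])];
      [:: (1, [:: Th; Xm]); (- q, [:: Xm; Th])];
      [:: (1, [:: Xm; Xp]); (- (q ^+ 2)^-1, [:: Xp; Xm])];
      [:: (1, [:: Th; Th]); (- (s * (q - 1)), [:: Xm; Xp])];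
      [:: (1, [:: Xp; Xpi]); (-1, [::])];
      [:: (1, [:: Xpi; Xp]); (-1, [::])] ].

Record igen := IGen { ig_c : K; ig_l : word; ig_r : fs1; ig_rr : word }.
Definition igen_val (e : igen) : fs1 :=
  scale1 (ig_c e) (mul1 (mul1 (mono1 (ig_l e)) (ig_r e)) (mono1 (ig_rr e))).

Definition place2 (x : fs1) (k : bool) (w : word) : fs2 :=
  if k then [seq (p.1, w, p.2) | p <- x] else [seq (p.1, p.2, w) | p <- x].
Definition place3 (x : fs1) (k : 'I_3) (w1 w2 : word) : fs3 :=
  match val k with
  | 0 => [seq (p.1, p.2, w1, w2) | p <- x]
  | 1 => [seq (p.1, w1, p.2, w2) | p <- x]
  | _ => [seq (p.1, w1, w2, p.2) | p <- x]
  end.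

(* membership in the ideal I (resp. I(x)F + F(x)I, resp. the kernel of
   F(x)F(x)F -> A(x)A(x)A) *)
Definition inI1 (q s : K) (a : fs1) : Prop :=
  exists l : seq igen, all (fun e => ig_r e \in rels q s) l /\
    feq1 a (flatten [seq igen_val e | e <- l]).
Definition inI2 (q s : K) (a : fs2) : Prop :=
  exists l : seq (igen * bool * word), all (fun e => ig_r e.1.1 \in rels q s) l /\
    feq2 a (flatten [seq place2 (igen_val e.1.1) e.1.2 e.2 | e <- l]).
Definition inI3 (q s : K) (a : fs3) : Prop :=
  exists l : seq (igen * 'I_3 * word * word),
    all (fun e => ig_r e.1.1.1 \in rels q s) l /\
    feq3 a (flatten [seq place3 (igen_val e.1.1.1) e.1.1.2 e.1.2 e.2 | e <- l]).

Definition eqA (q s : K) (a b : fs1) := inI1 q s (a ++ scale1 (-1) b).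
Definition eqA2 (q s : K) (a b : fs2) := inI2 q s (a ++ scale2 (-1) b).
Definition eqA3 (q s : K) (a b : fs3) := inI3 q s (a ++ scale3 (-1) b).

(* linear maps are given by their values on the basis words and extended
   linearly *)
Definition linD (D : word -> fs2) (a : fs1) : fs2 :=
  flatten [seq scale2 p.1 (D p.2) | p <- a].
Definition linE (E : word -> K) (a : fs1) : K := \sum_(p <- a) p.1 * E p.2.
Definition linS (S : word -> fs1) (a : fs1) : fs1 :=
  flatten [seq scale1 p.1 (S p.2) | p <- a].

Definition D_id (D : word -> fs2) (t : fs2) : fs3 :=
  flatten [seq [seq (p.1.1 * e.1.1, e.1.2, e.2, p.2) | e <- D p.1.2] | p <- t].
Definition id_D (D : word -> fs2) (t : fs2) : fs3 :=
  flatten [seq [seq (p.1.1 * e.1.1, p.1.2, e.1.2, e.2) | e <- D p.2] | p <- t].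
Definition m_E_id (E : word -> K) (t : fs2) : fs1 :=
  [seq (p.1.1 * E p.1.2, p.2) | p <- t].
Definition m_id_E (E : word -> K) (t : fs2) : fs1 :=
  [seq (p.1.1 * E p.2, p.1.2) | p <- t].
Definition m_S_id (S : word -> fs1) (t : fs2) : fs1 :=
  flatten [seq scale1 p.1.1 (mul1 (S p.1.2) (mono1 p.2)) | p <- t].
Definition m_id_S (S : word -> fs1) (t : fs2) : fs1 :=
  flatten [seq scale1 p.1.1 (mul1 (mono1 p.1.2) (S p.2)) | p <- t].

Definition homog (i : bool) (a : fs1) : bool := all (fun p => wpar p.2 == i) a.

Definition is_super_hopf (q s : K)
    (D : word -> fs2) (E : word -> K) (S : word -> fs1) : Prop :=
  [/\ [/\ (* well defined on the quotient A *)
      (forall a b, eqA q s a b -> eqA2 q s (linD D a) (linD D b)),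
      (forall a b, eqA q s a b -> linE E a = linE E b) &
      (forall a b, eqA q s a b -> eqA q s (linS S a) (linS S b))],
      (forall a, eqA3 q s (D_id D (linD D a)) (id_D D (linD D a))),
      (forall a, eqA q s (m_E_id E (linD D a)) a /\ eqA q s (m_id_E E (linD D a)) a),
      (forall a, eqA q s (m_S_id S (linD D a)) (scale1 (linE E a) one1) /\
                 eqA q s (m_id_S S (linD D a)) (scale1 (linE E a) one1)) &
      [/\ eqA2 q s (linD D one1) one2, linE E one1 = 1 & eqA q s (linS S one1) one1] /\
      [/\ (forall a b, eqA2 q s (linD D (mul1 a b)) (mul2 (linD D a) (linD D b))),
          (forall a b, linE E (mul1 a b) = linE E a * linE E b) &
          (forall (i j : bool) a b, homog i a -> homog j b ->
             eqA q s (linS S (mul1 a b))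
                     (scale1 ((-1) ^+ (i && j)) (mul1 (linS S b) (linS S a))))]].

End SuperHopf.

(* Main.v *)
Require Import Defs.
From HB Require Import structures.
From mathcomp Require Import all_boot all_order all_algebra complex.
From mathcomp Require Import ring.
Require Import Defs.
Import Order.TTheory GRing.Theory Num.Theory.
Local Open Scope ring_scope.
Set Implicit Arguments. Unset Strict Implicit. Unset Printing Implicit Defensive.


Section Base.
Variable K : fieldType.

Definition sg (b : bool) : K := (-1) ^+ b.
Definition ev1 (a : fs1 K) (f : word -> K) : K := \sum_(p <- a) p.1 * f p.2.
Definition ev2 (a : fs2 K) (f : word -> word -> K) : K :=
  \sum_(p <- a) p.1.1 * f p.1.2 p.2.
Definition ev3 (a : fs3 K) (f : word -> word -> word -> K) : K :=
  \sum_(p <- a) p.1.1.1 * f p.1.1.2 p.1.2 p.2.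

Lemma sum_ind (T : eqType) (s : seq T) (x : T) (F : T -> K) : uniq s -> x \in s ->
  \sum_(t <- s) (if x == t then F t else 0) = F x.
Proof.
move=> us xs; rewrite (bigD1_seq x) //= eqxx big1 ?addr0 // => t.
by rewrite eq_sym => /negbTE ->.
Qed.

Lemma LFgen (P T : eqType) (c : P -> K) (k : P -> T) (a b : seq P) :
  (forall x, \sum_(p <- a | k p == x) c p = \sum_(p <- b | k p == x) c p) ->
  forall f, \sum_(p <- a) c p * f (k p) = \sum_(p <- b) c p * f (k p).
Proof.
move=> H f.
set s := undup (map k (a ++ b)).
have E x : {subset map k x <= s} ->
  \sum_(p <- x) c p * f (k p) = \sum_(t <- s) (\sum_(p <- x | k p == t) c p) * f t.
  move=> sub.
  transitivity (\sum_(t <- s) \sum_(p <- x) (if k p == t then c p * f t else 0)).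
    rewrite exchange_big /=; apply: eq_big_seq => p px.
    rewrite sum_ind //; first exact: undup_uniq.
    by apply: sub; apply: map_f.
  apply: eq_bigr => t _; rewrite big_distrl /= [RHS]big_mkcond /=.
  by apply: eq_bigr => p _; case: eqP => // ->; rewrite mul0r.
rewrite !E; first by apply: eq_bigr => t _; rewrite H.
- by move=> t tb; rewrite mem_undup map_cat mem_cat tb orbT.
- by move=> t tb; rewrite mem_undup map_cat mem_cat tb.
Qed.

Lemma feq1_ev (a b : fs1 K) : feq1 a b -> forall f, ev1 a f = ev1 b f.
Proof. by move=> H f; apply: (LFgen (c := fst) (k := snd)). Qed.

Lemma coef1_ev (a : fs1 K) w : coef1 a w = ev1 a (fun u => (u == w)%:R).
Proof.
rewrite /coef1 /ev1 big_mkcond; apply: eq_bigr => p _.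
by case: eqP; rewrite ?mulr1 ?mulr0.
Qed.

Lemma ev_feq1 (a b : fs1 K) : (forall f, ev1 a f = ev1 b f) -> feq1 a b.
Proof. by move=> H w; rewrite !coef1_ev. Qed.

Lemma feq2_ev (a b : fs2 K) : feq2 a b -> forall f, ev2 a f = ev2 b f.
Proof.
move=> H f.
apply: (LFgen (c := fun p : K * word * word => p.1.1) (k := fun p => (p.1.2, p.2))
  _ (fun x => f x.1 x.2)) => -[u v].
have E (x : fs2 K) : \sum_(p <- x | (p.1.2, p.2) == (u, v)) p.1.1 = coef2 x u v.
  by apply: eq_bigl => p; rewrite xpair_eqE.
by rewrite !E H.
Qed.

Lemma coef2_ev (a : fs2 K) u v : coef2 a u v = ev2 a (fun x y => ((x == u) && (y == v))%:R).
Proof.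
rewrite /coef2 /ev2 big_mkcond; apply: eq_bigr => p _.
by case: ifP; rewrite ?mulr1 ?mulr0.
Qed.

Lemma ev_feq2 (a b : fs2 K) : (forall f, ev2 a f = ev2 b f) -> feq2 a b.
Proof. by move=> H u v; rewrite !coef2_ev. Qed.

Lemma coef3_ev (a : fs3 K) u v w : coef3 a u v w =
  ev3 a (fun x y z => [&& x == u, y == v & z == w]%:R).
Proof.
rewrite /coef3 /ev3 big_mkcond; apply: eq_bigr => p _.
by case: ifP; rewrite ?mulr1 ?mulr0.
Qed.

Lemma ev_feq3 (a b : fs3 K) : (forall f, ev3 a f = ev3 b f) -> feq3 a b.
Proof. by move=> H u v w; rewrite !coef3_ev. Qed.

End Base.


Section Ops.
Variable K : fieldType.
Implicit Types (a b : fs1 K) (t : fs2 K) (TT : fs3 K).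

Lemma eq_ev1 a f g : (forall u, f u = g u) -> ev1 a f = ev1 a g.
Proof. by move=> H; apply: eq_bigr => p _; rewrite H. Qed.
Lemma eq_ev1_in a f g : (forall p, p \in a -> f p.2 = g p.2) -> ev1 a f = ev1 a g.
Proof. by move=> H; apply: eq_big_seq => p pa; rewrite H. Qed.
Lemma eq_ev2 t f g : (forall u v, f u v = g u v) -> ev2 t f = ev2 t g.
Proof. by move=> H; apply: eq_bigr => p _; rewrite H. Qed.
Lemma eq_ev2_in t f g : (forall p, p \in t -> f p.1.2 p.2 = g p.1.2 p.2) -> ev2 t f = ev2 t g.
Proof. by move=> H; apply: eq_big_seq => p pa; rewrite H. Qed.
Lemma eq_ev3 TT f g : (forall u v w, f u v w = g u v w) -> ev3 TT f = ev3 TT g.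
Proof. by move=> H; apply: eq_bigr => p _; rewrite H. Qed.

Lemma ev1M a c f : ev1 a (fun u => c * f u) = c * ev1 a f.
Proof. by rewrite /ev1 mulr_sumr; apply: eq_bigr => p _; rewrite mulrCA. Qed.
Lemma ev2M t c f : ev2 t (fun u v => c * f u v) = c * ev2 t f.
Proof. by rewrite /ev2 mulr_sumr; apply: eq_bigr => p _; rewrite mulrCA. Qed.
Lemma ev3M TT c f : ev3 TT (fun u v w => c * f u v w) = c * ev3 TT f.
Proof. by rewrite /ev3 mulr_sumr; apply: eq_bigr => p _; rewrite mulrCA. Qed.
Lemma ev1D a f g : ev1 a (fun u => f u + g u) = ev1 a f + ev1 a g.
Proof. by rewrite /ev1 -big_split; apply: eq_bigr => p _; rewrite mulrDr. Qed.
Lemma ev2D t f g : ev2 t (fun u v => f u v + g u v) = ev2 t f + ev2 t g.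
Proof. by rewrite /ev2 -big_split; apply: eq_bigr => p _; rewrite mulrDr. Qed.
Lemma ev1_0 a : ev1 a (fun _ => 0) = 0.
Proof. by rewrite /ev1 big1 // => p _; rewrite mulr0. Qed.
Lemma ev2_0 t : ev2 t (fun _ _ => 0) = 0.
Proof. by rewrite /ev2 big1 // => p _; rewrite mulr0. Qed.

Lemma ev1_cat a b f : ev1 (a ++ b) f = ev1 a f + ev1 b f.
Proof. by rewrite /ev1 big_cat. Qed.
Lemma ev2_cat (t t' : fs2 K) f : ev2 (t ++ t') f = ev2 t f + ev2 t' f.
Proof. by rewrite /ev2 big_cat. Qed.
Lemma ev3_cat (t t' : fs3 K) f : ev3 (t ++ t') f = ev3 t f + ev3 t' f.
Proof. by rewrite /ev3 big_cat. Qed.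
Lemma ev1_nil f : ev1 ([::] : fs1 K) f = 0. Proof. by rewrite /ev1 big_nil. Qed.
Lemma ev2_nil f : ev2 ([::] : fs2 K) f = 0. Proof. by rewrite /ev2 big_nil. Qed.
Lemma ev3_nil f : ev3 ([::] : fs3 K) f = 0. Proof. by rewrite /ev3 big_nil. Qed.
Lemma ev1_flatten (L : seq (fs1 K)) f : ev1 (flatten L) f = \sum_(x <- L) ev1 x f.
Proof. by rewrite /ev1 big_flatten. Qed.
Lemma ev2_flatten (L : seq (fs2 K)) f : ev2 (flatten L) f = \sum_(x <- L) ev2 x f.
Proof. by rewrite /ev2 big_flatten. Qed.
Lemma ev3_flatten (L : seq (fs3 K)) f : ev3 (flatten L) f = \sum_(x <- L) ev3 x f.
Proof. by rewrite /ev3 big_flatten. Qed.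

Lemma ev1_scale a c f : ev1 (scale1 c a) f = c * ev1 a f.
Proof. by rewrite /ev1 big_map mulr_sumr; apply: eq_bigr => p _; rewrite mulrA. Qed.
Lemma ev2_scale t c f : ev2 (scale2 c t) f = c * ev2 t f.
Proof. by rewrite /ev2 big_map mulr_sumr; apply: eq_bigr => p _; rewrite mulrA. Qed.
Lemma ev3_scale TT c f : ev3 (scale3 c TT) f = c * ev3 TT f.
Proof. by rewrite /ev3 big_map mulr_sumr; apply: eq_bigr => p _; rewrite mulrA. Qed.

Lemma ev1_mul a b f : ev1 (mul1 a b) f = ev1 a (fun u => ev1 b (fun v => f (u ++ v))).
Proof.
rewrite /ev1 /mul1 big_allpairs_dep; apply: eq_bigr => p _.
by rewrite mulr_sumr; apply: eq_bigr => r _ /=; rewrite mulrA.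
Qed.
Lemma ev1_mono w f : ev1 (mono1 K w) f = f w.
Proof. by rewrite /ev1 big_seq1 mul1r. Qed.
Lemma ev1_one f : ev1 (one1 K) f = f [::].
Proof. by rewrite /ev1 big_seq1 mul1r. Qed.
Lemma ev2_one f : ev2 (one2 K) f = f [::] [::].
Proof. by rewrite /ev2 big_seq1 mul1r. Qed.

Lemma ev2_mul t t' f : ev2 (mul2 t t') f =
  ev2 t (fun u1 u2 => ev2 t' (fun v1 v2 => sg K (wpar u2 && wpar v1) * f (u1 ++ v1) (u2 ++ v2))).
Proof.
rewrite /ev2 /mul2 big_allpairs_dep; apply: eq_bigr => p _.
rewrite mulr_sumr; apply: eq_bigr => r _ /=; rewrite /sg; ring.
Qed.

Lemma ev2_linD D a f : ev2 (linD D a) f = ev1 a (fun u => ev2 (D u) f).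
Proof.
rewrite /linD ev2_flatten /ev1 big_map; apply: eq_bigr => p _; by rewrite ev2_scale.
Qed.
Lemma ev1_linS S a f : ev1 (linS S a) f = ev1 a (fun u => ev1 (S u) f).
Proof.
rewrite /linS ev1_flatten /ev1 big_map; apply: eq_bigr => p _; exact: ev1_scale.
Qed.
Lemma linE_ev E a : linE E a = ev1 a E.
Proof. by []. Qed.

Lemma ev2_place (x : fs1 K) (k : bool) w f :
  ev2 (place2 x k w) f = ev1 x (fun u => if k then f w u else f u w).
Proof. by case: k; rewrite /place2 /ev2 big_map. Qed.

Lemma ev1_igen (e : igen K) f :
  ev1 (igen_val e) f = ig_c e * ev1 (ig_r e) (fun z => f (ig_l e ++ z ++ ig_rr e)).
Proof.
rewrite /igen_val ev1_scale !ev1_mul ev1_mono; congr (_ * _).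
by apply: eq_ev1 => u; rewrite ev1_mono catA.
Qed.

Lemma ev3_Did D t f :
  ev3 (D_id D t) f = ev2 t (fun u v => ev2 (D u) (fun x y => f x y v)).
Proof.
rewrite /D_id ev3_flatten /ev2 big_map; apply: eq_bigr => p _.
rewrite /ev3 big_map mulr_sumr; apply: eq_bigr => e _ /=; by rewrite mulrA.
Qed.
Lemma ev3_idD D t f :
  ev3 (id_D D t) f = ev2 t (fun u v => ev2 (D v) (fun x y => f u x y)).
Proof.
rewrite /id_D ev3_flatten /ev2 big_map; apply: eq_bigr => p _.
rewrite /ev3 big_map mulr_sumr; apply: eq_bigr => e _ /=; by rewrite mulrA.
Qed.
Lemma ev1_mEid E t f : ev1 (m_E_id E t) f = ev2 t (fun u v => E u * f v).
Proof. by rewrite /ev1 /m_E_id big_map; apply: eq_bigr => p _; rewrite mulrA. Qed.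
Lemma ev1_midE E t f : ev1 (m_id_E E t) f = ev2 t (fun u v => E v * f u).
Proof. by rewrite /ev1 /m_id_E big_map; apply: eq_bigr => p _; rewrite mulrA. Qed.
Lemma ev1_mSid S t f :
  ev1 (m_S_id S t) f = ev2 t (fun u v => ev1 (S u) (fun z => f (z ++ v))).
Proof.
rewrite /m_S_id ev1_flatten /ev2 big_map; apply: eq_bigr => p _.
by rewrite ev1_scale ev1_mul; congr (_ * _); apply: eq_ev1 => z; rewrite ev1_mono.
Qed.
Lemma ev1_midS S t f :
  ev1 (m_id_S S t) f = ev2 t (fun u v => ev1 (S v) (fun z => f (u ++ z))).
Proof.
rewrite /m_id_S ev1_flatten /ev2 big_map; apply: eq_bigr => p _.
by rewrite ev1_scale ev1_mul ev1_mono.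
Qed.

Lemma ev1_swap a b F :
  ev1 a (fun u => ev1 b (fun v => F u v)) = ev1 b (fun v => ev1 a (fun u => F u v)).
Proof.
rewrite /ev1; under eq_bigr => p _ do rewrite mulr_sumr.
rewrite exchange_big /=; apply: eq_bigr => r _; rewrite mulr_sumr.
by apply: eq_bigr => p _; rewrite mulrCA.
Qed.
Lemma ev12_swap a t F :
  ev1 a (fun u => ev2 t (fun x y => F u x y)) = ev2 t (fun x y => ev1 a (fun u => F u x y)).
Proof.
rewrite /ev1 /ev2; under eq_bigr => p _ do rewrite mulr_sumr.
rewrite exchange_big /=; apply: eq_bigr => r _; rewrite mulr_sumr.
by apply: eq_bigr => p _; rewrite mulrCA.
Qed.
Lemma ev2_swap t t' F :
  ev2 t (fun u v => ev2 t' (fun x y => F u v x y)) = ev2 t' (fun x y => ev2 t (fun u v => F u v x y)).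
Proof.
rewrite /ev2; under eq_bigr => p _ do rewrite mulr_sumr.
rewrite exchange_big /=; apply: eq_bigr => r _; rewrite mulr_sumr.
by apply: eq_bigr => p _; rewrite mulrCA.
Qed.

End Ops.


Ltac sgcase := rewrite /sg;
  repeat match goal with
  | |- context [wpar ?w] => case: (wpar w)
  | |- context [?x == Th] => case: (x == Th)
  end;
  rewrite /=; ring.

Lemma wpar_cat u v : wpar (u ++ v) = wpar u (+) wpar v.
Proof. by rewrite /wpar count_cat oddD. Qed.
Lemma wpar_cons g w : wpar (g :: w) = (g == Th) (+) wpar w.
Proof. by rewrite /wpar /= oddD; case: (g == Th). Qed.
Lemma wpar_nil : wpar [::] = false. Proof. by []. Qed.

Section Model.
Variable K : fieldType.

Definition Dg (g : gen) : fs2 K := match g with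
 | Xp => [:: (1, [:: Xp], [:: Xp])]
 | Xpi => [:: (1, [:: Xpi], [:: Xpi])]
 | Th => [:: (1, [:: Th], [::]); (1, [::], [:: Th])]
 | Xm => [:: (1, [:: Xpi], [:: Xm]); (1, [:: Xm], [:: Xpi])] end.
Definition Dw (w : word) : fs2 K := foldr (fun g acc => mul2 (Dg g) acc) (one2 K) w.
Definition Eg (g : gen) : K := if (g == Xp) || (g == Xpi) then 1 else 0.
Definition Ew (w : word) : K := \prod_(g <- w) Eg g.
Definition Sg (g : gen) : fs1 K := match g with
 | Xp => [:: (1, [:: Xpi])]
 | Xpi => [:: (1, [:: Xp])]
 | Th => [:: (-1, [:: Th])]
 | Xm => [:: (-1, [:: Xp; Xm; Xp])] end.
Fixpoint Sw (w : word) : fs1 K := match w with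
 | [::] => one1 K
 | g :: w' => scale1 (sg K ((g == Th) && wpar w')) (mul1 (Sw w') (Sg g)) end.

Lemma sg_false : sg K false = 1. Proof. by rewrite /sg expr0. Qed.

Lemma Ew_cat u v : Ew (u ++ v) = Ew u * Ew v.
Proof. by rewrite /Ew big_cat. Qed.
Lemma Ew_cons g w : Ew (g :: w) = Eg g * Ew w.
Proof. by rewrite /Ew big_cons. Qed.
Lemma Ew_par w : wpar w -> Ew w = 0.
Proof.
elim: w => [//|g w IH]; rewrite wpar_cons Ew_cons.
by case: g => /=; rewrite /Eg /= => H; rewrite ?mul0r // IH ?mulr0.
Qed.
Lemma Ew_sgl w b : Ew w * sg K (wpar w && b) = Ew w.
Proof. by case E: (wpar w); rewrite /= ?sg_false ?mulr1 // Ew_par // mul0r. Qed.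
Lemma Ew_sgr w b : Ew w * sg K (b && wpar w) = Ew w.
Proof. by rewrite andbC Ew_sgl. Qed.

Lemma mul2A (A B C : fs2 K) f :
  ev2 (mul2 (mul2 A B) C) f = ev2 (mul2 A (mul2 B C)) f.
Proof.
rewrite !ev2_mul; apply: eq_ev2 => a1 a2; rewrite ev2_mul.
apply: eq_ev2 => b1 b2; rewrite -ev2M; apply: eq_ev2 => c1 c2.
rewrite !catA !wpar_cat; sgcase.
Qed.

Lemma mul2_1l (B : fs2 K) f : ev2 (mul2 (one2 K) B) f = ev2 B f.
Proof. by rewrite ev2_mul ev2_one; apply: eq_ev2 => u v; rewrite sg_false mul1r. Qed.
Lemma mul2_1r (B : fs2 K) f : ev2 (mul2 B (one2 K)) f = ev2 B f.
Proof.
rewrite ev2_mul; apply: eq_ev2 => u v.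
by rewrite ev2_one andbF sg_false mul1r !cats0.
Qed.

Lemma Dw_cat u v f : ev2 (Dw (u ++ v)) f = ev2 (mul2 (Dw u) (Dw v)) f.
Proof.
elim: u f => [|g u IH] f /=; first by rewrite mul2_1l.
rewrite ev2_mul; under eq_ev2 => a1 a2 do rewrite IH.
by rewrite -ev2_mul mul2A.
Qed.

Lemma Dw1 g f : ev2 (Dw [:: g]) f = ev2 (Dg g) f.
Proof. by rewrite /= mul2_1r. Qed.

Lemma Dg_par g p : p \in Dg g -> wpar p.1.2 (+) wpar p.2 = (g == Th).
Proof.
case: g; rewrite /Dg !inE;
  repeat (case/orP=> [/eqP -> //|]); by move/eqP => ->.
Qed.

Lemma Dw_par w p : p \in Dw w -> wpar p.1.2 (+) wpar p.2 = wpar w.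
Proof.
elim: w p => [|g w IH] p /=; first by rewrite inE => /eqP ->.
case/allpairsP => -[x y] /= [xD yD ->] /=.
rewrite wpar_cons !wpar_cat -(Dg_par xD) -(IH _ yD).
by case: (wpar x.1.2); case: (wpar x.2); case: (wpar y.1.2); case: (wpar y.2).
Qed.

Lemma Sw_cat u v f :
  ev1 (Sw (u ++ v)) f = sg K (wpar u && wpar v) * ev1 (mul1 (Sw v) (Sw u)) f.
Proof.
elim: u v f => [|g u IH] v f /=.
  by rewrite sg_false mul1r ev1_mul; apply: eq_ev1 => x; rewrite ev1_one cats0.
rewrite ev1_scale ev1_mul IH ev1_mul ev1_mul.
under [in RHS]eq_ev1 => x do rewrite ev1_scale ev1_mul.
rewrite -[RHS]ev1M mulrA -ev1M; apply: eq_ev1 => x; rewrite mulrA; congr (_ * _).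
  by rewrite wpar_cons wpar_cat; sgcase.
by apply: eq_ev1 => y; apply: eq_ev1 => z; rewrite catA.
Qed.

End Model.


Section Ideal1.
Variable K : fieldType.
Variables q s : K.
Implicit Types (a b c d x y : fs1 K).

Definition inI x := exists L : seq (igen K), all (fun e => ig_r e \in rels q s) L /\
  forall f, ev1 x f = ev1 (flatten [seq igen_val e | e <- L]) f.

Lemma inIE x : inI1 q s x <-> inI x.
Proof.
split=> -[L [HL HE]]; exists L; split => //.
  by apply: feq1_ev.
by apply: ev_feq1.
Qed.

Lemma ev1_sum a (L : seq (igen K)) (F : word -> igen K -> K) :
  ev1 a (fun u => \sum_(e <- L) F u e) = \sum_(e <- L) ev1 a (fun u => F u e).
Proof.
rewrite /ev1; under eq_bigr => p _ do rewrite mulr_sumr.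
by rewrite exchange_big.
Qed.

Lemma inI_ev x y : (forall f, ev1 x f = ev1 y f) -> inI x -> inI y.
Proof. by move=> H [L [HL HE]]; exists L; split => // f; rewrite -H. Qed.

Lemma inI_nil : inI [::].
Proof. by exists [::]. Qed.

Lemma inI_zero x : (forall f, ev1 x f = 0) -> inI x.
Proof. by move=> H; apply: (inI_ev _ inI_nil) => f; rewrite H ev1_nil. Qed.

Lemma inI_cat a b : inI a -> inI b -> inI (a ++ b).
Proof.
move=> [La [Ha Ea]] [Lb [Hb Eb]]; exists (La ++ Lb); split.
  by rewrite all_cat Ha Hb.
by move=> f; rewrite map_cat flatten_cat !ev1_cat Ea Eb.
Qed.

Lemma inI_scale k a : inI a -> inI (scale1 k a).
Proof.
move=> [L [HL E]].
exists [seq IGen (k * ig_c e) (ig_l e) (ig_r e) (ig_rr e) | e <- L]; split.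
  by rewrite all_map; apply: sub_all HL => e.
move=> f; rewrite ev1_scale E !ev1_flatten -map_comp big_map mulr_sumr.
rewrite big_map; apply: eq_bigr => e _ /=; by rewrite !ev1_igen /= mulrA.
Qed.

Lemma inI_gen (e : igen K) : ig_r e \in rels q s -> inI (igen_val e).
Proof. by move=> H; exists [:: e]; rewrite /= H cats0. Qed.

Lemma inI_mull a x : inI x -> inI (mul1 a x).
Proof.
move=> [L [HL E]].
exists [seq IGen (p.1 * ig_c e) (p.2 ++ ig_l e) (ig_r e) (ig_rr e) | e <- L, p <- a]; split.
  elim: L HL {E} => [//|e L IH] /= /andP [He HL].
  by rewrite all_cat IH // andbT all_map; apply/allP => p _ /=.
move=> f; rewrite ev1_mul.
under eq_ev1 => u do rewrite E ev1_flatten big_map.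
rewrite ev1_sum ev1_flatten big_map big_allpairs_dep; apply: eq_bigr => e _.
under eq_ev1 => u do rewrite ev1_igen.
under [RHS]eq_bigr => p _ do rewrite ev1_igen.
rewrite {1}/ev1; apply: eq_bigr => p _ /=; rewrite -mulrA.
by congr (_ * (_ * _)); apply: eq_ev1 => z; rewrite !catA.
Qed.

Lemma inI_mulr x b : inI x -> inI (mul1 x b).
Proof.
move=> [L [HL E]].
exists [seq IGen (ig_c e * p.1) (ig_l e) (ig_r e) (ig_rr e ++ p.2) | e <- L, p <- b]; split.
  elim: L HL {E} => [//|e L IH] /= /andP [He HL].
  by rewrite all_cat IH // andbT all_map; apply/allP => p _ /=.
move=> f; rewrite ev1_mul E ev1_flatten big_map.
rewrite ev1_flatten big_map big_allpairs_dep; apply: eq_bigr => e _.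
under [RHS]eq_bigr => p _ do rewrite ev1_igen.
rewrite ev1_igen ev1_swap -ev1M {1}/ev1; apply: eq_bigr => p _ /=.
rewrite mulrA [p.1 * _]mulrC; congr (_ * _); apply: eq_ev1 => z.
by rewrite -!catA.
Qed.

Lemma inI_flatten (L : seq (fs1 K)) : (forall x, x \in L -> inI x) -> inI (flatten L).
Proof.
elim: L => [|x L IH] H /=; first exact: inI_nil.
apply: inI_cat; first by apply: H; rewrite mem_head.
by apply: IH => y yL; apply: H; rewrite inE yL orbT.
Qed.

Lemma inI_map a (F : K * word -> fs1 K) :
  (forall p, p \in a -> inI (F p)) -> inI (flatten (map F a)).
Proof.
move=> H; apply: inI_flatten => x /mapP [p pa ->]; exact: H.
Qed.

Lemma eqAE a b : eqA q s a b <-> inI (a ++ scale1 (-1) b).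
Proof. exact: inIE. Qed.

Lemma evN a f : ev1 (scale1 (-1) a) f = - ev1 a f.
Proof. by rewrite ev1_scale mulN1r. Qed.

Lemma eqA_ev a b : (forall f, ev1 a f = ev1 b f) -> eqA q s a b.
Proof. by move=> H; apply/eqAE/inI_zero => f; rewrite ev1_cat evN H subrr. Qed.

Lemma eqA_refl a : eqA q s a a.
Proof. exact: eqA_ev. Qed.

Lemma eqA_trans b a c : eqA q s a b -> eqA q s b c -> eqA q s a c.
Proof.
move=> /eqAE H1 /eqAE H2; apply/eqAE; apply: inI_ev (inI_cat H1 H2) => f.
rewrite !ev1_cat !evN; ring.
Qed.

Lemma eqA_sym a b : eqA q s a b -> eqA q s b a.
Proof.
move=> /eqAE H; apply/eqAE; apply: inI_ev (inI_scale (-1) H) => f.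
rewrite ev1_scale !ev1_cat !evN; ring.
Qed.

Lemma eqA_evl a a' b : (forall f, ev1 a f = ev1 a' f) -> eqA q s a b -> eqA q s a' b.
Proof. by move=> H; apply: eqA_trans; apply: eqA_ev => f; rewrite H. Qed.
Lemma eqA_evr a b b' : (forall f, ev1 b f = ev1 b' f) -> eqA q s a b -> eqA q s a b'.
Proof. by move=> H E; apply: eqA_trans E _; apply: eqA_ev. Qed.

Lemma eqA_cat a b c d : eqA q s a b -> eqA q s c d -> eqA q s (a ++ c) (b ++ d).
Proof.
move=> /eqAE H1 /eqAE H2; apply/eqAE; apply: inI_ev (inI_cat H1 H2) => f.
rewrite !(ev1_cat, ev1_scale); ring.
Qed.

Lemma eqA_scale k a b : eqA q s a b -> eqA q s (scale1 k a) (scale1 k b).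
Proof.
move=> /eqAE H; apply/eqAE; apply: inI_ev (inI_scale k H) => f.
rewrite !ev1_scale !ev1_cat !evN !ev1_scale; ring.
Qed.

Lemma eqA_mull x a b : eqA q s a b -> eqA q s (mul1 x a) (mul1 x b).
Proof.
move=> /eqAE H; apply/eqAE; apply: inI_ev (inI_mull x H) => f.
rewrite [RHS]ev1_cat evN !ev1_mul -[X in _ = _ + X]mulN1r -ev1M -ev1D.
by apply: eq_ev1 => u; rewrite ev1_cat evN; ring.
Qed.

Lemma eqA_mulr x a b : eqA q s a b -> eqA q s (mul1 a x) (mul1 b x).
Proof.
move=> /eqAE H; apply/eqAE; apply: inI_ev (inI_mulr x H) => f.
by rewrite !(ev1_cat, evN, ev1_mul).
Qed.

Lemma eqA_mul a b c d : eqA q s a b -> eqA q s c d -> eqA q s (mul1 a c) (mul1 b d).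
Proof.
move=> H1 H2; apply: (eqA_trans (b := mul1 b c)); first exact: eqA_mulr.
exact: eqA_mull.
Qed.

Lemma eqA_map a (F G : K * word -> fs1 K) :
  (forall p, p \in a -> eqA q s (F p) (G p)) ->
  eqA q s (flatten (map F a)) (flatten (map G a)).
Proof.
elim: a => [|p a IH] H /=; first exact: eqA_refl.
apply: eqA_cat; first by apply: H; rewrite mem_head.
by apply: IH => r ra; apply: H; rewrite inE ra orbT.
Qed.

End Ideal1.


Arguments place2 : simpl never.
Section Ideal2.
Variable K : fieldType.
Variables q s : K.

Definition rpar (r : fs1 K) : bool := if r is t :: _ then wpar t.2 else false.

Lemma rels_hom r : r \in rels q s -> forall z, z \in r -> wpar z.2 = rpar r.
Proof.
rewrite /rels !inE.
by repeat (case/orP=> [/eqP -> z|]; first by rewrite !inE => /orP [] /eqP ->);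
  move/eqP => -> z; rewrite !inE => /orP [] /eqP ->.
Qed.

Definition inJ (x : fs2 K) := exists L : seq (igen K * bool * word),
  all (fun e => ig_r e.1.1 \in rels q s) L /\
  forall f, ev2 x f = ev2 (flatten [seq place2 (igen_val e.1.1) e.1.2 e.2 | e <- L]) f.

Lemma inJE x : inI2 q s x <-> inJ x.
Proof.
split=> -[L [HL HE]]; exists L; split => //.
  by apply: feq2_ev.
by apply: ev_feq2.
Qed.

Lemma inJ_ev x y : (forall f, ev2 x f = ev2 y f) -> inJ x -> inJ y.
Proof. by move=> H [L [HL HE]]; exists L; split => // f; rewrite -H. Qed.

Lemma inJ_nil : inJ [::].
Proof. by exists [::]. Qed.

Lemma inJ_cat a b : inJ a -> inJ b -> inJ (a ++ b).
Proof.
move=> [La [Ha Ea]] [Lb [Hb Eb]]; exists (La ++ Lb); split.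
  by rewrite all_cat Ha Hb.
by move=> f; rewrite map_cat flatten_cat !ev2_cat Ea Eb.
Qed.

Lemma inJ_flatten (L : seq (fs2 K)) : (forall x, x \in L -> inJ x) -> inJ (flatten L).
Proof.
elim: L => [|x L IH] H /=; first exact: inJ_nil.
apply: inJ_cat; first by apply: H; rewrite mem_head.
by apply: IH => y yL; apply: H; rewrite inE yL orbT.
Qed.

Lemma inJ_fmap (T : Type) (P : pred T) (L : seq T) (F : T -> fs2 K) :
  all P L -> (forall e, P e -> inJ (F e)) -> inJ (flatten (map F L)).
Proof.
move=> HL H; elim: L HL => [|e L IH] /=; first by move=> _; exact: inJ_nil.
by case/andP => He HL; apply: inJ_cat; [apply: H | apply: IH].
Qed.

Lemma inJ_gen (e : igen K) k w : ig_r e \in rels q s -> inJ (place2 (igen_val e) k w).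
Proof. by move=> H; exists [:: (e, k, w)]; rewrite /= H cats0. Qed.

Lemma inJ_scale k a : inJ a -> inJ (scale2 k a).
Proof.
move=> [L [HL E]].
exists [seq (IGen (k * ig_c e.1.1) (ig_l e.1.1) (ig_r e.1.1) (ig_rr e.1.1), e.1.2, e.2) | e <- L]; split.
  by rewrite all_map; apply: sub_all HL => e.
move=> f; rewrite ev2_scale E !ev2_flatten -map_comp big_map mulr_sumr big_map.
by apply: eq_bigr => e _ /=; rewrite !ev2_place !ev1_igen /= mulrA.
Qed.

Definition wl (p : K * word * word) (e : igen K) (k : bool) (w : word) :=
  if k then (IGen (p.1.1 * sg K (wpar p.2 && wpar w) * ig_c e) (p.2 ++ ig_l e) (ig_r e) (ig_rr e),
             true, p.1.2 ++ w)
  else (IGen (p.1.1 * sg K (wpar p.2 && (wpar (ig_l e) (+) rpar (ig_r e) (+) wpar (ig_rr e)))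
               * ig_c e) (p.1.2 ++ ig_l e) (ig_r e) (ig_rr e), false, p.2 ++ w).

Lemma inJ_mull_gen (a : fs2 K) (e : igen K) k w :
  ig_r e \in rels q s -> inJ (mul2 a (place2 (igen_val e) k w)).
Proof.
move=> He; exists [seq wl p e k w | p <- a]; split.
  by rewrite all_map; apply/allP => p _ /=; case: k.
move=> f; rewrite ev2_mul ev2_flatten -map_comp big_map {1}/ev2.
apply: eq_bigr => p _ /=; case: k; rewrite !ev2_place !ev1_igen /= -!mulrA; congr (_ * _).
  rewrite ev1M mulrCA; congr (_ * (_ * _)); apply: eq_ev1 => z; by rewrite catA.
rewrite (@eq_ev1_in _ _ _ (fun z => sg K (wpar p.2 && (wpar (ig_l e) (+) rpar (ig_r e)
   (+) wpar (ig_rr e))) * f ((p.1.2 ++ ig_l e) ++ z ++ ig_rr e) (p.2 ++ w))).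
  by rewrite ev1M mulrCA.
by move=> z zr; rewrite !wpar_cat (rels_hom He zr) addbA !catA.
Qed.

Definition wr (p : K * word * word) (e : igen K) (k : bool) (w : word) :=
  if k then (IGen (ig_c e * sg K ((wpar (ig_l e) (+) rpar (ig_r e) (+) wpar (ig_rr e)) && wpar p.1.2) * p.1.1)
               (ig_l e) (ig_r e) (ig_rr e ++ p.2), true, w ++ p.1.2)
  else (IGen (ig_c e * sg K (wpar w && wpar p.1.2) * p.1.1)
               (ig_l e) (ig_r e) (ig_rr e ++ p.1.2), false, w ++ p.2).

Lemma inJ_mulr_gen (a : fs2 K) (e : igen K) k w :
  ig_r e \in rels q s -> inJ (mul2 (place2 (igen_val e) k w) a).
Proof.
move=> He; exists [seq wr p e k w | p <- a]; split.
  by rewrite all_map; apply/allP => p _ /=; case: k.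
move=> f; rewrite ev2_mul ev2_flatten -map_comp big_map ev2_place ev1_igen.
case: k; rewrite ev12_swap -ev2M {1}/ev2; apply: eq_bigr => p _ /=;
  rewrite ev2_place ev1_igen /=.
  rewrite (@eq_ev1_in _ _ _ (fun z => sg K ((wpar (ig_l e) (+) rpar (ig_r e) (+)
     wpar (ig_rr e)) && wpar p.1.2) * f (w ++ p.1.2) (ig_l e ++ z ++ ig_rr e ++ p.2))).
    by rewrite ev1M; ring.
  by move=> z zr; rewrite !wpar_cat (rels_hom He zr) addbA -!catA.
under eq_ev1 => z do rewrite -!catA.
by rewrite ev1M; ring.
Qed.

Lemma ev2_sum (a : fs2 K) (T : Type) (L : seq T) (F : word -> word -> T -> K) :
  ev2 a (fun u v => \sum_(e <- L) F u v e) = \sum_(e <- L) ev2 a (fun u v => F u v e).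
Proof.
rewrite /ev2; under eq_bigr => p _ do rewrite mulr_sumr.
by rewrite exchange_big.
Qed.

Lemma inJ_mull a x : inJ x -> inJ (mul2 a x).
Proof.
move=> [L [HL E]].
apply: (inJ_ev (x := flatten [seq mul2 a (place2 (igen_val e.1.1) e.1.2 e.2) | e <- L])).
  move=> f; rewrite ev2_mul ev2_flatten big_map.
  under [RHS]eq_ev2 => u v do rewrite E ev2_flatten big_map.
  rewrite ev2_sum; apply: eq_bigr => e _; by rewrite ev2_mul.
by apply: (inJ_fmap HL) => e He; apply: inJ_mull_gen.
Qed.

Lemma inJ_mulr a x : inJ x -> inJ (mul2 x a).
Proof.
move=> [L [HL E]].
apply: (inJ_ev (x := flatten [seq mul2 (place2 (igen_val e.1.1) e.1.2 e.2) a | e <- L])).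
  move=> f; rewrite ev2_mul ev2_flatten big_map E ev2_flatten big_map.
  by apply: eq_bigr => e _; rewrite ev2_mul.
by apply: (inJ_fmap HL) => e He; apply: inJ_mulr_gen.
Qed.

End Ideal2.


Section Main.
Variable K : fieldType.
Variables q s : K.

Definition rl (i : nat) : fs1 K := nth [::] (rels q s) i.
Lemma rl_in i : (i < 6)%N -> rl i \in rels q s.
Proof. by move=> H; apply: mem_nth. Qed.

Ltac evs := rewrite /ev1 /ev2 /ev3 /= ?big_cons ?big_nil /=.

Ltac conc := move=> f;
  rewrite ?ev2_linD ?ev1_linS ?ev1_mSid ?ev1_midS ?ev2_flatten ?ev1_flatten ?ev1_cat ?ev1_scale /=
    ?big_cons ?big_nil ?ev2_place ?ev1_igen /=;
  rewrite /ev1 /ev2 /ev3 /= ?big_cons ?big_nil /=; rewrite /sg /Eg /=; ring.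

Lemma D_rels i : (i < 6)%N -> inJ q s (linD (@Dw K) (rl i)).
Proof.
case: i => [|[|[|[|[|[|//]]]]]] _.
- exists [:: (IGen 1 [::] (rl 0) [::], false, [:: Xp]); (IGen 1 [::] (rl 0) [::], true, [:: Xp])];
    split; [by rewrite /= !rl_in | conc].
- exists [:: (IGen 1 [:: Xpi] (rl 0) [:: Xpi], false, [:: Xm]);
             (IGen (-1) [::] (rl 5) [:: Th; Xpi], false, [:: Xm]);
             (IGen q [:: Xpi; Th] (rl 4) [::], false, [:: Xm]);
             (IGen 1 [:: Xpi] (rl 0) [:: Xpi], true, [:: Xm]);
             (IGen (-1) [::] (rl 5) [:: Th; Xpi], true, [:: Xm]);
             (IGen q [:: Xpi; Th] (rl 4) [::], true, [:: Xm]);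
             (IGen 1 [::] (rl 1) [::], false, [:: Xpi]);
             (IGen 1 [::] (rl 1) [::], true, [:: Xpi])];
    split; [by rewrite /= !rl_in | conc].
- exists [:: (IGen 1 [::] (rl 2) [::], true, [::]); (IGen 1 [::] (rl 2) [::], false, [::]);
             (IGen 1 [::] (rl 5) [::], false, [:: Xm; Xp]); (IGen 1 [::] (rl 5) [::], true, [:: Xm; Xp]);
             (IGen (- (q ^+ 2)^-1) [::] (rl 4) [::], false, [:: Xp; Xm]);
             (IGen (- (q ^+ 2)^-1) [::] (rl 4) [::], true, [:: Xp; Xm])];
    split; [by rewrite /= !rl_in | conc].
- exists [:: (IGen 1 [::] (rl 3) [::], false, [::]); (IGen 1 [::] (rl 3) [::], true, [::]);
             (IGen (- (s * (q - 1))) [::] (rl 5) [::], false, [:: Xm; Xp]);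
             (IGen (- (s * (q - 1))) [::] (rl 5) [::], true, [:: Xm; Xp])];
    split; [by rewrite /= !rl_in | conc].
- exists [:: (IGen 1 [::] (rl 4) [::], false, [:: Xp; Xpi]); (IGen 1 [::] (rl 4) [::], true, [::])];
    split; [by rewrite /= !rl_in | conc].
- exists [:: (IGen 1 [::] (rl 5) [::], false, [:: Xpi; Xp]); (IGen 1 [::] (rl 5) [::], true, [::])];
    split; [by rewrite /= !rl_in | conc].
Qed.

Lemma S_rels i : (i < 6)%N -> inI q s (linS (@Sw K) (rl i)).
Proof.
case: i => [|[|[|[|[|[|//]]]]]] _.
- exists [:: IGen (-1) [:: Xpi] (rl 0) [:: Xpi]; IGen 1 [::] (rl 5) [:: Th; Xpi];
             IGen (-q) [:: Xpi; Th] (rl 4) [::]]; split; [by rewrite /= !rl_in | conc].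
- exists [:: IGen 1 [:: Xp; Xm] (rl 0) [::]; IGen 1 [::] (rl 0) [:: Xm; Xp];
             IGen (-1) [:: Xp] (rl 1) [:: Xp]]; split; [by rewrite /= !rl_in | conc].
- exists [:: IGen (-1) [::] (rl 5) [:: Xm; Xp]; IGen ((q ^+ 2)^-1) [:: Xp; Xm] (rl 4) [::];
             IGen (-1) [::] (rl 2) [::]]; split; [by rewrite /= !rl_in | conc].
- exists [:: IGen (-1) [::] (rl 3) [::]; IGen (s * (q - 1)) [::] (rl 5) [:: Xm; Xp]];
    split; [by rewrite /= !rl_in | conc].
- exists [:: IGen 1 [::] (rl 4) [::]]; split; [by rewrite /= !rl_in | conc].
- exists [:: IGen 1 [::] (rl 5) [::]]; split; [by rewrite /= !rl_in | conc].
Qed.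

Lemma rels_rl r : r \in rels q s -> exists2 i, (i < 6)%N & r = rl i.
Proof.
move=> H; exists (index r (rels q s)); first by rewrite -[6%N]/(size (rels q s)) index_mem.
by rewrite /rl nth_index.
Qed.

Lemma E_rels r : r \in rels q s -> ev1 r (@Ew K) = 0.
Proof.
case/rels_rl => i + ->; case: i => [|[|[|[|[|[|//]]]]]] _;
  rewrite /ev1 /Ew /= ?big_cons ?big_nil /Eg /=; ring.
Qed.

Lemma AS_gen g : eqA q s (m_S_id (@Sw K) (Dg K g)) (scale1 (Eg K g) (one1 K)).
Proof.
apply/eqAE; case: g.
- by exists [:: IGen 1 [::] (rl 5) [::]]; split; [by rewrite /= !rl_in | conc].
- by exists [:: IGen (-1) [:: Xp; Xm] (rl 4) [::]]; split; [by rewrite /= !rl_in | conc].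
- by exists [:: IGen 1 [::] (rl 4) [::]]; split; [by rewrite /= !rl_in | conc].
- by exists [::]; split; [by [] | conc].
Qed.

Lemma AS'_gen g : eqA q s (m_id_S (@Sw K) (Dg K g)) (scale1 (Eg K g) (one1 K)).
Proof.
apply/eqAE; case: g.
- by exists [:: IGen 1 [::] (rl 4) [::]]; split; [by rewrite /= !rl_in | conc].
- by exists [:: IGen (-1) [::] (rl 5) [:: Xm; Xp]]; split; [by rewrite /= !rl_in | conc].
- by exists [:: IGen 1 [::] (rl 5) [::]]; split; [by rewrite /= !rl_in | conc].
- by exists [::]; split; [by [] | conc].
Qed.

Lemma coassoc_gen g (G : word -> word -> word -> K) :
  ev2 (Dg K g) (fun a1 a2 => ev2 (Dw K a1) (fun c1 c2 => G c1 c2 a2)) =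
  ev2 (Dg K g) (fun a1 a2 => ev2 (Dw K a2) (fun c1 c2 => G a1 c1 c2)).
Proof. by case: g; rewrite /ev1 /ev2 /= ?big_cons ?big_nil /=; rewrite /sg /=; ring. Qed.

Lemma counit_gen g (F : word -> K) :
  ev2 (Dg K g) (fun a1 a2 => Ew K a1 * F a2) = F [:: g] /\
  ev2 (Dg K g) (fun a1 a2 => Ew K a2 * F a1) = F [:: g].
Proof. by case: g; rewrite /ev2 /Ew /= ?big_cons ?big_nil /Eg /=; split; ring. Qed.

End Main.


Section Main2.
Variable K : fieldType.
Variables q s : K.
Notation Dw := (Dw K).
Notation Sw := (Sw K).
Notation Ew := (Ew K).

Lemma mul2_congr_r (A B B' : fs2 K) f : (forall h, ev2 B h = ev2 B' h) ->
  ev2 (mul2 A B) f = ev2 (mul2 A B') f.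
Proof. by move=> H; rewrite !ev2_mul; apply: eq_ev2 => u v; rewrite H. Qed.
Lemma mul2_congr_l (A A' B : fs2 K) f : (forall h, ev2 A h = ev2 A' h) ->
  ev2 (mul2 A B) f = ev2 (mul2 A' B) f.
Proof. by move=> H; rewrite !ev2_mul H. Qed.

Lemma mul2_linD_l (r : fs1 K) (B : fs2 K) f :
  ev2 (mul2 (linD Dw r) B) f = ev1 r (fun z => ev2 (mul2 (Dw z) B) f).
Proof. by rewrite ev2_mul ev2_linD; apply: eq_ev1 => z; rewrite ev2_mul. Qed.

Lemma mul2_linD_r (r : fs1 K) (A : fs2 K) f :
  ev2 (mul2 A (linD Dw r)) f = ev1 r (fun z => ev2 (mul2 A (Dw z)) f).
Proof.
under [RHS]eq_ev1 => z do rewrite ev2_mul.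
by rewrite ev12_swap ev2_mul; apply: eq_ev2 => u v; rewrite ev2_linD.
Qed.

Lemma mul3_linD (r : fs1 K) (A B : fs2 K) f :
  ev2 (mul2 (mul2 A (linD Dw r)) B) f = ev1 r (fun z => ev2 (mul2 (mul2 A (Dw z)) B) f).
Proof. by rewrite ev2_mul mul2_linD_r; apply: eq_ev1 => z; rewrite [RHS]ev2_mul. Qed.

Lemma D_gen (e : igen K) : ig_r e \in rels q s -> inJ q s (linD Dw (igen_val e)).
Proof.
move=> He.
apply: (inJ_ev (x := scale2 (ig_c e) (mul2 (mul2 (Dw (ig_l e)) (linD Dw (ig_r e))) (Dw (ig_rr e))))).
  move=> f; rewrite ev2_scale ev2_linD ev1_igen; congr (_ * _).
  rewrite mul3_linD; apply: eq_ev1 => z.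
  by rewrite mul2A Dw_cat; apply: mul2_congr_r => h; rewrite Dw_cat.
apply: inJ_scale; apply: inJ_mulr; apply: inJ_mull.
by case/rels_rl: He => i i6 ->; apply: D_rels.
Qed.

Lemma D_wd x : inI q s x -> inJ q s (linD Dw x).
Proof.
move=> [L [HL E]]; apply: (inJ_ev (x := flatten [seq linD Dw (igen_val e) | e <- L])).
  move=> f; rewrite ev2_flatten big_map ev2_linD E ev1_flatten big_map.
  by apply: eq_bigr => e _; rewrite ev2_linD.
by apply: (inJ_fmap HL) => e He; apply: D_gen.
Qed.

Lemma E_wd x : inI q s x -> ev1 x Ew = 0.
Proof.
move=> [L [HL E]]; rewrite E ev1_flatten big_map {E}.
elim: L HL => [|e L IH] /=; first by rewrite big_nil.
case/andP => He HL; rewrite big_cons IH // addr0 ev1_igen.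
transitivity (ig_c e * (Ew (ig_l e) * Ew (ig_rr e) * ev1 (ig_r e) Ew)).
  congr (_ * _); rewrite -ev1M; apply: eq_ev1 => z; rewrite !Ew_cat; ring.
by rewrite (E_rels He) !mulr0.
Qed.

Lemma inI_fmap (T : Type) (P : pred T) (L : seq T) (F : T -> fs1 K) :
  all P L -> (forall e, P e -> inI q s (F e)) -> inI q s (flatten (map F L)).
Proof.
move=> HL H; elim: L HL => [|e L IH] /=; first by move=> _; exact: inI_nil.
by case/andP => He HL; apply: inI_cat; [apply: H | apply: IH].
Qed.

Lemma S_gen (e : igen K) : ig_r e \in rels q s -> inI q s (linS Sw (igen_val e)).
Proof.
move=> He.
apply: (inI_ev (x := scale1 (ig_c e * (sg K (wpar (ig_l e) && (rpar (ig_r e) (+) wpar (ig_rr e)))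
   * sg K (rpar (ig_r e) && wpar (ig_rr e))))
   (mul1 (mul1 (Sw (ig_rr e)) (linS Sw (ig_r e))) (Sw (ig_l e))))).
  move=> f; rewrite ev1_linS ev1_igen ev1_scale -mulrA; congr (_ * _).
  rewrite ev1_mul ev1_mul.
  under eq_ev1 => a do rewrite ev1_linS.
  rewrite ev1_swap -ev1M; apply: eq_ev1_in => z zr.
  rewrite Sw_cat ev1_mul Sw_cat ev1_mul wpar_cat (rels_hom He zr) mulrA.
  by congr (_ * _); apply: eq_ev1 => a; apply: eq_ev1 => b; apply: eq_ev1 => y; rewrite catA.
apply: inI_scale; apply: inI_mulr; apply: inI_mull.
by case/rels_rl: He => i i6 ->; apply: S_rels.
Qed.

Lemma S_wd x : inI q s x -> inI q s (linS Sw x).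
Proof.
move=> [L [HL E]]; apply: (inI_ev (x := flatten [seq linS Sw (igen_val e) | e <- L])).
  move=> f; rewrite ev1_flatten big_map ev1_linS E ev1_flatten big_map.
  by apply: eq_bigr => e _; rewrite ev1_linS.
by apply: (inI_fmap HL) => e He; apply: S_gen.
Qed.

Lemma coassoc_w w f :
  ev2 (Dw w) (fun u v => ev2 (Dw u) (fun x y => f x y v)) =
  ev2 (Dw w) (fun u v => ev2 (Dw v) (fun x y => f u x y)).
Proof.
elim: w f => [|g w IH] f; first by rewrite /= !ev2_one.
rewrite /= !ev2_mul.
pose G a2 c1 c2 := ev2 (Dw w) (fun b1 b2 => ev2 (Dw b2) (fun e1 e2 =>
   sg K (wpar a2 && (wpar b1 (+) wpar e1)) *
   (sg K (wpar c2 && wpar b1) * f (c1 ++ b1) (c2 ++ e1) (a2 ++ e2)))).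
transitivity (ev2 (Dg K g) (fun a1 a2 => ev2 (Dw a1) (fun c1 c2 => G a2 c1 c2))).
  apply: eq_ev2 => a1 a2.
  transitivity (ev2 (Dw a1) (fun c1 c2 => ev2 (Dw w) (fun b1 b2 => ev2 (Dw b1) (fun d1 d2 =>
     sg K (wpar a2 && (wpar d1 (+) wpar d2)) *
     (sg K (wpar c2 && wpar d1) * f (c1 ++ d1) (c2 ++ d2) (a2 ++ b2)))))); last first.
    by apply: eq_ev2 => c1 c2; rewrite /G; apply: IH.
  rewrite [RHS]ev2_swap; apply: eq_ev2 => b1 b2.
  rewrite Dw_cat ev2_mul -ev2M; apply: eq_ev2 => c1 c2.
  rewrite -ev2M; apply: eq_ev2_in => p pD.
  by rewrite (Dw_par pD) !mulrA.
rewrite coassoc_gen; apply: eq_ev2 => a1 a2; rewrite /G.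
rewrite ev2_swap; apply: eq_ev2 => b1 b2.
rewrite Dw_cat ev2_mul -ev2M; apply: eq_ev2_in => p pD.
rewrite -ev2M; apply: eq_ev2 => e1 e2.
rewrite -(Dw_par pD); sgcase.
Qed.

End Main2.


Section Main3.
Variable K : fieldType.
Variables q s : K.
Notation Dw := (Dw K).
Notation Sw := (Sw K).
Notation Ew := (Ew K).

Lemma counitL w f : ev2 (Dw w) (fun u v => Ew u * f v) = f w.
Proof.
elim: w f => [|g w IH] f; first by rewrite /= ev2_one /Ew big_nil mul1r.
rewrite /= ev2_mul.
transitivity (ev2 (Dg K g) (fun a1 a2 => Ew a1 * f (a2 ++ w))); last first.
  by rewrite (counit_gen g (fun v => f (v ++ w))).1.
apply: eq_ev2 => a1 a2; rewrite -[f (a2 ++ w)](IH (fun v => f (a2 ++ v))) -ev2M.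
apply: eq_ev2 => b1 b2.
by rewrite Ew_cat -[in RHS](Ew_sgr K b1 (wpar a2)); ring.
Qed.

Lemma counitR w f : ev2 (Dw w) (fun u v => Ew v * f u) = f w.
Proof.
elim: w f => [|g w IH] f; first by rewrite /= ev2_one /Ew big_nil mul1r.
rewrite /= ev2_mul.
transitivity (ev2 (Dg K g) (fun a1 a2 => Ew a2 * f (a1 ++ w))); last first.
  by rewrite (counit_gen g (fun v => f (v ++ w))).2.
apply: eq_ev2 => a1 a2; rewrite -[f (a1 ++ w)](IH (fun v => f (a1 ++ v))) -ev2M.
apply: eq_ev2 => b1 b2.
by rewrite Ew_cat -[in RHS](Ew_sgl K a2 (wpar b1)); ring.
Qed.

Definition sand (h : K * word * word -> K) (A B : word -> fs1 K) (Y : fs2 K) (Z : fs1 K) :=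
  flatten [seq scale1 (h y) (mul1 (mul1 (A y.1.2) Z) (B y.2)) | y <- Y].

Lemma ev1_sand h A B Y Z f : ev1 (sand h A B Y Z) f =
  \sum_(y <- Y) h y * ev1 (A y.1.2) (fun x => ev1 Z (fun z => ev1 (B y.2) (fun w => f ((x ++ z) ++ w)))).
Proof.
rewrite /sand ev1_flatten big_map; apply: eq_bigr => y _.
by rewrite ev1_scale !ev1_mul.
Qed.

Lemma sand_I h A B Y Z : inI q s Z -> inI q s (sand h A B Y Z).
Proof.
move=> HZ; apply: (@inI_fmap _ _ _ _ predT); first exact: all_predT.
by move=> y _; apply: inI_scale; apply: inI_mulr; apply: inI_mull.
Qed.

Lemma sand_eqA h A B Y Z Z' : eqA q s Z Z' -> eqA q s (sand h A B Y Z) (sand h A B Y Z').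
Proof.
move=> /eqAE H; apply/eqAE; apply: inI_ev (sand_I h A B Y H) => f.
rewrite ev1_cat evN !ev1_sand -sumrN -big_split; apply: eq_bigr => y _ /=.
rewrite -mulrN -mulrDr; congr (_ * _).
rewrite -[X in _ = _ + X]mulN1r -ev1M -ev1D; apply: eq_ev1 => x; rewrite ev1_cat evN; ring.
Qed.

Lemma mSid_mul2 g (Y : fs2 K) f :
  ev1 (m_S_id Sw (mul2 (Dg K g) Y)) f =
  ev1 (sand (fun y => y.1.1 * sg K ((g == Th) && wpar y.1.2)) Sw (mono1 K) Y
            (m_S_id Sw (Dg K g))) f.
Proof.
rewrite ev1_mSid ev2_mul ev1_sand ev2_swap {1}/ev2; apply: eq_bigr => y _.
rewrite -mulrA; congr (_ * _).
rewrite -ev1M; under [RHS]eq_ev1 => x do rewrite ev1_mSid -ev2M.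
rewrite ev12_swap; apply: eq_ev2_in => p pD.
rewrite Sw_cat ev1_mul mulrA -ev1M; apply: eq_ev1 => x; congr (_ * _).
  by rewrite -(Dg_par pD); sgcase.
apply: eq_ev1 => z; by rewrite ev1_mono !catA.
Qed.

Lemma sandS_unit g (Y : fs2 K) f :
  ev1 (sand (fun y => y.1.1 * sg K ((g == Th) && wpar y.1.2)) Sw (mono1 K) Y
            (scale1 (Eg K g) (one1 K))) f = ev1 (scale1 (Eg K g) (m_S_id Sw Y)) f.
Proof.
rewrite ev1_sand ev1_scale ev1_mSid /ev2 mulr_sumr; apply: eq_bigr => y _.
have Hs : Eg K g * sg K ((g == Th) && wpar y.1.2) = Eg K g.
  by case: g; rewrite /Eg /= ?sg_false ?mulr1 ?mul0r.
under eq_ev1 => x do rewrite ev1_scale ev1_one ev1_mono cats0.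
rewrite (ev1M (Sw y.1.2) (Eg K g) (fun x => f (x ++ y.2))).
by rewrite -[in RHS]Hs; ring.
Qed.

Lemma antiS_w w : eqA q s (m_S_id Sw (Dw w)) (scale1 (Ew w) (one1 K)).
Proof.
elim: w => [|g w IH].
  apply: eqA_ev => f; rewrite ev1_mSid ev1_scale ev1_one /Ew big_nil mul1r.
  have -> : Dw [::] = one2 K by [].
  by rewrite ev2_one ev1_one.
apply: (eqA_evl (a := sand (fun y => y.1.1 * sg K ((g == Th) && wpar y.1.2)) Sw (mono1 K)
   (Dw w) (m_S_id Sw (Dg K g)))).
  by move=> f; rewrite -mSid_mul2.
apply: eqA_trans (sand_eqA _ _ _ _ (AS_gen q s g)) _.
apply: (eqA_evl (a := scale1 (Eg K g) (m_S_id Sw (Dw w)))).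
  by move=> f; rewrite sandS_unit.
apply: eqA_trans (eqA_scale (Eg K g) IH) _.
by apply: eqA_ev => f; rewrite !ev1_scale Ew_cons mulrA.
Qed.

Lemma midS_mul2 (X : fs2 K) w f :
  ev1 (m_id_S Sw (mul2 X (Dw w))) f =
  ev1 (sand (fun x => x.1.1 * sg K (wpar x.2 && wpar w)) (mono1 K) Sw X
            (m_id_S Sw (Dw w))) f.
Proof.
rewrite ev1_midS ev2_mul ev1_sand {1}/ev2; apply: eq_bigr => x _.
rewrite -mulrA; congr (_ * _).
rewrite ev1_mono ev1_midS -ev2M; apply: eq_ev2_in => p pD.
rewrite Sw_cat ev1_mul mulrA; congr (_ * _).
  by rewrite -(Dw_par pD); sgcase.
apply: eq_ev1 => z; apply: eq_ev1 => v; by rewrite !catA.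
Qed.

Lemma sandS'_unit (X : fs2 K) w f :
  ev1 (sand (fun x => x.1.1 * sg K (wpar x.2 && wpar w)) (mono1 K) Sw X
            (scale1 (Ew w) (one1 K))) f = ev1 (scale1 (Ew w) (m_id_S Sw X)) f.
Proof.
rewrite ev1_sand ev1_scale ev1_midS /ev2 mulr_sumr; apply: eq_bigr => x _.
rewrite ev1_mono ev1_scale ev1_one.
under eq_ev1 => v do rewrite cats0.
by rewrite -[in RHS](Ew_sgr K w (wpar x.2)); ring.
Qed.

Lemma antiS'_w w : eqA q s (m_id_S Sw (Dw w)) (scale1 (Ew w) (one1 K)).
Proof.
elim: w => [|g w IH].
  apply: eqA_ev => f; rewrite ev1_midS ev1_scale ev1_one /Ew big_nil mul1r.
  have -> : Dw [::] = one2 K by [].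
  by rewrite ev2_one ev1_one.
apply: (eqA_evl (a := sand (fun x => x.1.1 * sg K (wpar x.2 && wpar w)) (mono1 K) Sw
   (Dg K g) (m_id_S Sw (Dw w)))).
  by move=> f; rewrite -midS_mul2.
apply: eqA_trans (sand_eqA _ _ _ _ IH) _.
apply: (eqA_evl (a := scale1 (Ew w) (m_id_S Sw (Dg K g)))).
  by move=> f; rewrite sandS'_unit.
apply: eqA_trans (eqA_scale (Ew w) (AS'_gen q s g)) _.
by apply: eqA_ev => f; rewrite !ev1_scale Ew_cons; ring.
Qed.

End Main3.


Section Final.
Variable K : fieldType.
Variables q s : K.
Notation Dw := (Dw K).
Notation Sw := (Sw K).
Notation Ew := (Ew K).

Lemma eqA2_ev (x y : fs2 K) : (forall f, ev2 x f = ev2 y f) -> eqA2 q s x y.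
Proof.
move=> H; apply/inJE; apply: (inJ_ev _ (inJ_nil q s)) => f.
by rewrite ev2_nil ev2_cat ev2_scale H; ring.
Qed.

Lemma eqA3_ev (x y : fs3 K) : (forall f, ev3 x f = ev3 y f) -> eqA3 q s x y.
Proof.
move=> H; exists [::]; split => //; apply: ev_feq3 => f /=.
by rewrite ev3_nil ev3_cat ev3_scale H; ring.
Qed.

Lemma hopf : is_super_hopf q s Dw Ew Sw.
Proof.
split.
- split.
  + move=> a b /eqAE /D_wd H; apply/inJE; apply: inJ_ev H => f.
    by rewrite ev2_cat ev2_scale !ev2_linD ev1_cat ev1_scale.
  + move=> a b /eqAE /E_wd; rewrite ev1_cat ev1_scale !linE_ev => H.
    by apply/eqP; rewrite -subr_eq0 -mulN1r; apply/eqP.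
  + move=> a b /eqAE /S_wd H; apply/eqAE; apply: inI_ev H => f.
    by rewrite ev1_cat ev1_scale !ev1_linS ev1_cat ev1_scale.
- move=> a; apply: eqA3_ev => f; rewrite ev3_Did ev3_idD !ev2_linD.
  by apply: eq_ev1 => w; apply: coassoc_w.
- move=> a; split; apply: eqA_ev => f.
    by rewrite ev1_mEid ev2_linD; apply: eq_ev1 => w; apply: counitL.
  by rewrite ev1_midE ev2_linD; apply: eq_ev1 => w; apply: counitR.
- move=> a; split.
  + apply: (eqA_evl (a := flatten [seq scale1 p.1 (m_S_id Sw (Dw p.2)) | p <- a])).
      move=> f; rewrite ev1_flatten big_map ev1_mSid ev2_linD /ev1.
      by apply: eq_bigr => p _; rewrite -/(ev1 _ _) ev1_scale ev1_mSid.
    apply: (eqA_evr (b := flatten [seq scale1 p.1 (scale1 (Ew p.2) (one1 K)) | p <- a])).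
      move=> f; rewrite ev1_flatten big_map ev1_scale ev1_one linE_ev /ev1 mulr_suml.
      by apply: eq_bigr => p _; rewrite -/(ev1 _ _) !ev1_scale ev1_one mulrA.
    by apply: eqA_map => p _; apply: eqA_scale; apply: antiS_w.
  + apply: (eqA_evl (a := flatten [seq scale1 p.1 (m_id_S Sw (Dw p.2)) | p <- a])).
      move=> f; rewrite ev1_flatten big_map ev1_midS ev2_linD /ev1.
      by apply: eq_bigr => p _; rewrite -/(ev1 _ _) ev1_scale ev1_midS.
    apply: (eqA_evr (b := flatten [seq scale1 p.1 (scale1 (Ew p.2) (one1 K)) | p <- a])).
      move=> f; rewrite ev1_flatten big_map ev1_scale ev1_one linE_ev /ev1 mulr_suml.
      by apply: eq_bigr => p _; rewrite -/(ev1 _ _) !ev1_scale ev1_one mulrA.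
    by apply: eqA_map => p _; apply: eqA_scale; apply: antiS'_w.
split.
- split.
  + apply: eqA2_ev => f; rewrite ev2_linD ev1_one.
    by have -> : Dw [::] = one2 K by [].
  + by rewrite linE_ev ev1_one /Ew big_nil.
  + by apply: eqA_ev => f; rewrite ev1_linS ev1_one.
- split.
  + move=> a b; apply: eqA2_ev => f; rewrite ev2_linD ev1_mul ev2_mul ev2_linD.
    apply: eq_ev1 => u; under eq_ev1 => v do rewrite Dw_cat ev2_mul.
    by rewrite ev12_swap; apply: eq_ev2 => u1 u2; rewrite ev2_linD.
  + move=> a b; rewrite !linE_ev ev1_mul.
    under eq_ev1 => u do under eq_ev1 => v do rewrite Ew_cat.
    under eq_ev1 => u do rewrite ev1M.
    by rewrite mulrC -ev1M; apply: eq_ev1 => u; rewrite mulrC.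
  + move=> i j a b Ha Hb; apply: eqA_ev => f.
    rewrite ev1_linS ev1_mul ev1_scale.
    transitivity (sg K (i && j) * ev1 b (fun v => ev1 a (fun u =>
       ev1 (Sw v) (fun x => ev1 (Sw u) (fun y => f (x ++ y)))))).
      rewrite ev1_swap -ev1M; apply: eq_ev1_in => p pb.
      rewrite -ev1M; apply: eq_ev1_in => r ra.
      rewrite Sw_cat ev1_mul (eqP (allP Ha r ra)) (eqP (allP Hb p pb)).
      done.
    congr (_ * _); rewrite ev1_mul ev1_linS; apply: eq_ev1 => v.
    under [RHS]eq_ev1 => x do rewrite ev1_linS.
    by rewrite ev1_swap.
Qed.

Ltac cc := rewrite /ev1 /ev2 /= ?big_cons ?big_nil /=; rewrite /sg /Eg /=; ring.

Lemma main_vals :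
  [/\ is_super_hopf q s Dw Ew Sw,
      [/\ eqA2 q s (linD Dw (mono1 K [:: Xp])) [:: (1, [:: Xp], [:: Xp])],
          eqA2 q s (linD Dw (mono1 K [:: Th])) [:: (1, [:: Th], [::]); (1, [::], [:: Th])] &
          eqA2 q s (linD Dw (mono1 K [:: Xm]))
               [:: (1, [:: Xpi], [:: Xm]); (1, [:: Xm], [:: Xpi])]],
      [/\ linE Ew (mono1 K [:: Xp]) = 1, linE Ew (mono1 K [:: Th]) = 0 &
          linE Ew (mono1 K [:: Xm]) = 0] &
      [/\ eqA q s (linS Sw (mono1 K [:: Xp])) (mono1 K [:: Xpi]),
          eqA q s (linS Sw (mono1 K [:: Th])) [:: (-1, [:: Th])] &
          eqA q s (linS Sw (mono1 K [:: Xm])) [:: (-1, [:: Xp; Xm; Xp])]]].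
Proof.
split; first exact: hopf.
- split; apply: eqA2_ev => f; rewrite ev2_linD ev1_mono; cc.
- split; rewrite linE_ev ev1_mono /Ew; cc.
- split; apply: eqA_ev => f; rewrite ev1_linS ev1_mono; cc.
Qed.

End Final.

Theorem theorem3p2 (R : rcfType) (q s : R[i]) :
  q != 0 -> s ^+ 2 = q ->
  exists (D : word -> fs2 R[i]) (E : word -> R[i]) (S : word -> fs1 R[i]),
    [/\ is_super_hopf q s D E S,
        [/\ eqA2 q s (linD D (mono1 R[i] [:: Xp])) [:: (1, [:: Xp], [:: Xp])],
            eqA2 q s (linD D (mono1 R[i] [:: Th])) [:: (1, [:: Th], [::]); (1, [::], [:: Th])] &
            eqA2 q s (linD D (mono1 R[i] [:: Xm]))
                 [:: (1, [:: Xpi], [:: Xm]); (1, [:: Xm], [:: Xpi])]],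
        [/\ linE E (mono1 R[i] [:: Xp]) = 1, linE E (mono1 R[i] [:: Th]) = 0 &
            linE E (mono1 R[i] [:: Xm]) = 0] &
        [/\ eqA q s (linS S (mono1 R[i] [:: Xp])) (mono1 R[i] [:: Xpi]),
            eqA q s (linS S (mono1 R[i] [:: Th])) [:: (-1, [:: Th])] &
            eqA q s (linS S (mono1 R[i] [:: Xm])) [:: (-1, [:: Xp; Xm; Xp])]]].
Proof.
move=> _ _; exists (Dw R[i]), (Ew R[i]), (Sw R[i]); exact: main_vals.
Qed.
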